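(* Fix a constant $\lambda\ge0$ and $R>0$, and suppose $\Gamma\cap\mathcal O$ is the straight segment $\{(x,0):-R<x<R\}$, where $\mathcal O$ is the open disc of radius $R$ centered at the origin, with $\boldsymbol n=(0,1)^T$ or $\boldsymbol n=(0,-1)^T$ its unit normal. Let the collocation points be $\boldsymbol q^{(1)}_k=(\eta^{(1)}_kR,0)$, $k=1,2,3$, with $\eta^{(1)}_k$ distinct; $\boldsymbol q^{(2)}_k=(\eta^{(2)}_kR,0)$, $k=1,2$, with $\eta^{(2)}_1\ne\eta^{(2)}_2$; $\boldsymbol q^{(3)}=(\eta^{(3)}R,0)$; and $\boldsymbol q^{(4)}_k=R\boldsymbol\xi_k$, $k=1,2,3$, where $\boldsymbol\xi_1,\boldsymbol\xi_2,\boldsymbol\xi_3$ are non-collinear points; all constants $\eta^{(d)}_k,\boldsymbol\xi_k$ are independent of $R$ and all points lie in $\mathcal O$. Then the $15\times15$ collocation matrix $\boldsymbol M$ defined in the context is independent of $R$ and invertible.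
   Context: Let $\phi_1=1,\phi_2=x,\phi_3=y,\phi_4=x^2,\phi_5=y^2,\phi_6=xy$. Unknowns are $\boldsymbol c_1,\dots,\boldsymbol c_6\in\mathbb R^2$ (components $c_j^{(1)},c_j^{(2)}$) and $d_1,d_2,d_3\in\mathbb R$, i.e. a vector in $\mathbb R^{15}$, representing $\hat{\boldsymbol v}(\boldsymbol x)=\sum_{j=1}^6\boldsymbol c_j\phi_j(\boldsymbol x/R)$, $\hat q(\boldsymbol x)=\sum_{j=1}^3\frac{d_j}{R}\phi_j(\boldsymbol x/R)$. The matrix $\boldsymbol M$ is the matrix of the linear map sending the unknowns to the 15 quantities: (i) for $k=1,2,3$: $\sum_{j=1}^6\phi_j(\boldsymbol q^{(1)}_k/R)\boldsymbol c_j\in\mathbb R^2$; (ii) for $k=1,2$: $\sum_{j=1}^6\big(\boldsymbol c_j\nabla\phi_j^T+\nabla\phi_j\boldsymbol c_j^T\big)(\boldsymbol q^{(2)}_k/R)\,\boldsymbol n(\boldsymbol q^{(2)}_k)-\sum_{j=1}^3d_j\phi_j(\boldsymbol q^{(2)}_k/R)\boldsymbol n(\boldsymbol q^{(2)}_k)\in\mathbb R^2$; (iii) $\sum_{j=1}^6\big((\Delta-\lambda)\phi_j\big)(\boldsymbol q^{(3)}/R)\,\boldsymbol c_j-\sum_{j=1}^3\nabla\phi_j(\boldsymbol q^{(3)}/R)\,d_j\in\mathbb R^2$; (iv) for $k=1,2,3$: $\sum_{j=1}^6\big(\partial_x\phi_j\,c_j^{(1)}+\partial_y\phi_j\,c_j^{(2)}\big)(\boldsymbol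 q^{(4)}_k/R)\in\mathbb R$ (with any fixed ordering of rows and columns). These encode collocation of the Dirichlet condition, the traction (Neumann) condition, the Brinkman momentum equation $\Delta\hat{\boldsymbol v}-\lambda\hat{\boldsymbol v}-\nabla\hat q$, and the divergence-free condition, after scaling by powers of $R$. *)

(* Defs.v *)
From HB Require Import structures.
From mathcomp Require Import all_boot all_order all_algebra.
Set Implicit Arguments. Unset Strict Implicit. Unset Printing Implicit Defensive.
Import Order.TTheory GRing.Theory Num.Theory.
Local Open Scope ring_scope.

Section Colloc.
Variable R : realFieldType.

Definition pt := (R * R)%type.

Definition comp (p : pt) (a : nat) : R := if a == 0%N then p.1 else p.2.

Definition sdiv (p : pt) (r : R) : pt := (p.1 / r, p.2 / r).

(* monomial basis phi_1..phi_6 = 1, x, y, x^2, y^2, xy  (indexed 0..5) *)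
Definition phi (j : nat) (p : pt) : R :=
  match j with
  | 0 => 1 | 1 => p.1 | 2 => p.2 | 3 => p.1 ^+ 2 | 4 => p.2 ^+ 2 | _ => p.1 * p.2
  end.

Definition dphi (j : nat) (a : nat) (p : pt) : R :=
  if a == 0%N then
    match j with
    | 0 => 0 | 1 => 1 | 2 => 0 | 3 => 2 * p.1 | 4 => 0 | _ => p.2 end
  else
    match j with
    | 0 => 0 | 1 => 0 | 2 => 1 | 3 => 0 | 4 => 2 * p.2 | _ => p.1 end.

Definition lapphi (j : nat) (p : pt) : R :=
  match j with 3 => 2 | 4 => 2 | _ => 0 end.

(* Unknown ordering: column c < 12 is c_j^(b) with j = c %/ 2, b = c %% 2
   (j = 0..5 for c_1..c_6, b = 0,1 for the two components);
   column 12 + j is d_{j+1}, j = 0..2.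
   Row ordering: rows 2k+a (k<3): block (i), component a;
   rows 6+2k+a (k<2): block (ii); rows 10+a: block (iii); rows 12+k: block (iv). *)
Definition colloc_entry (lam : R) (n : pt) (q1 q2 : nat -> pt) (q3 : pt)
    (q4 : nat -> pt) (Rad : R) (row col : nat) : R :=
  let isc := (col < 12)%N in
  let j := if isc then (col %/ 2)%N else (col - 12)%N in
  let b := (col %% 2)%N in
  if (row < 6)%N then
    (* (i) Dirichlet: sum_j phi_j(q1_k/R) c_j *)
    let k := (row %/ 2)%N in let a := (row %% 2)%N in
    let p := sdiv (q1 k) Rad in
    if isc then (if a == b then phi j p else 0) else 0
  else if (row < 10)%N then
    (* (ii) traction *)
    let k := ((row - 6) %/ 2)%N in let a := ((row - 6) %% 2)%N in
    let p := sdiv (q2 k) Rad in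
    let nv := n in
    if isc then
      (if a == b then dphi j 0 p * comp nv 0 + dphi j 1 p * comp nv 1 else 0)
      + dphi j a p * comp nv b
    else - (phi j p * comp nv a)
  else if (row < 12)%N then
    (* (iii) Brinkman momentum *)
    let a := (row - 10)%N in
    let p := sdiv q3 Rad in
    if isc then (if a == b then lapphi j p - lam * phi j p else 0)
    else - dphi j a p
  else
    (* (iv) divergence *)
    let k := (row - 12)%N in
    let p := sdiv (q4 k) Rad in
    if isc then dphi j b p else 0.

Definition colloc_mx lam n q1 q2 q3 q4 Rad : 'M[R]_15 :=
  \matrix_(i < 15, j < 15) colloc_entry lam n q1 q2 q3 q4 Rad i j.

Definition in_disc (Rad : R) (p : pt) : Prop := p.1 ^+ 2 + p.2 ^+ 2 < Rad ^+ 2.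

Definition collinear (a b c : pt) : Prop :=
  (b.1 - a.1) * (c.2 - a.2) - (b.2 - a.2) * (c.1 - a.1) = 0.

Definition scalept (r : R) (p : pt) : pt := (r * p.1, r * p.2).

End Colloc.

(* Main.v *)
Require Import Defs.
From HB Require Import structures.
From mathcomp Require Import all_boot all_order all_algebra.
From mathcomp Require Import ring.
Import Order.TTheory GRing.Theory Num.Theory.
Local Open Scope ring_scope.

Lemma inj_unit (F : fieldType) n (A : 'M[F]_n) :
  (forall v : 'cV_n, A *m v = 0 -> v = 0) -> A \in unitmx.
Proof.
move=> H; rewrite -unitmx_tr -row_free_unit -kermx_eq0.
apply/eqP/row_matrixP => i; rewrite row0.
have h : row i (kermx A^T) *m A^T = 0 by rewrite -row_mul mulmx_ker row0.
apply: trmx_inj; rewrite trmx0; apply: H.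
by have := congr1 trmx h; rewrite trmx_mul trmxK trmx0.
Qed.

Lemma sum15 (R : nzRingType) (f : nat -> R) : \sum_(j < 15) f j =
  f 0%N + f 1%N + f 2%N + f 3%N + f 4%N + f 5%N + f 6%N + f 7%N + f 8%N +
  f 9%N + f 10%N + f 11%N + f 12%N + f 13%N + f 14%N.
Proof. by rewrite !big_ord_recr big_ord0 /= add0r. Qed.


Lemma sdivE1 {R : realFieldType} {Rad e : R} : Rad != 0 -> sdiv (e * Rad, 0) Rad = (e, 0).
Proof. by move=> h; rewrite /sdiv /= mulfK // mul0r. Qed.

Lemma sdivE2 {R : realFieldType} {Rad : R} {p} : Rad != 0 -> sdiv (scalept Rad p) Rad = p.
Proof. by move=> h; rewrite /sdiv /scalept /= !(mulrC Rad) !mulfK //; case: p. Qed.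

Lemma stripS {R : realFieldType} {s y : R} : s != 0 -> s * y = 0 -> y = 0.
Proof. by move=> hs /eqP; rewrite mulf_eq0 (negbTE hs) => /eqP. Qed.

Lemma two0 {R : realFieldType} {y : R} : 2 * y = 0 -> y = 0.
Proof. by move/eqP; rewrite mulf_eq0 pnatr_eq0 /= => /eqP. Qed.

Lemma eq0_trans {R : realFieldType} {a b : R} : a = b -> b = 0 -> a = 0.
Proof. by move=> -> . Qed.

Lemma comb2 {R : realFieldType} (k1 k2 : R) {a b x : R} : a = 0 -> b = 0 -> x = k1 * a + k2 * b -> x = 0.
Proof. by move=> -> -> ->; rewrite !mulr0 addr0. Qed.

Lemma lin2 {R : realFieldType} {a b y0 y1 : R} : a != b -> y0 + a * y1 = 0 -> y0 + b * y1 = 0 ->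
  y0 = 0 /\ y1 = 0.
Proof.
move=> hab h1 h2.
have h : (a - b) * y1 = 0 by apply: (comb2 1 (-1) h1 h2); ring.
move/eqP: h; rewrite mulf_eq0 subr_eq0 (negbTE hab) /= => /eqP h.
by split => //; move: h1; rewrite h mulr0 addr0.
Qed.

Lemma vand3 {R : realFieldType} {a b c y0 y1 y2 : R} : a != b -> a != c -> b != c ->
  y0 + a * y1 + a ^+ 2 * y2 = 0 -> y0 + b * y1 + b ^+ 2 * y2 = 0 ->
  y0 + c * y1 + c ^+ 2 * y2 = 0 -> [/\ y0 = 0, y1 = 0 & y2 = 0].
Proof.
move=> hab hac hbc h1 h2 h3.
have e1 : (a - b) * (y1 + a * y2 + b * y2) = 0 by apply: (comb2 1 (-1) h1 h2); ring.
have e2 : (a - c) * (y1 + a * y2 + c * y2) = 0 by apply: (comb2 1 (-1) h1 h3); ring.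
move/eqP: e1; rewrite mulf_eq0 subr_eq0 (negbTE hab) /= => /eqP e1.
move/eqP: e2; rewrite mulf_eq0 subr_eq0 (negbTE hac) /= => /eqP e2.
have [f1 f2] := lin2 hbc e1 e2.
have g1 : y1 = 0 by move: f1; rewrite f2 mulr0 addr0.
split => //; move: h1; rewrite g1 f2 !mulr0 !addr0 //.
Qed.

Lemma aff3 {R : realFieldType} {p q r : R * R} {c0 c1 c2 : R} : ~ collinear p q r ->
  c0 + c1 * p.1 + c2 * p.2 = 0 -> c0 + c1 * q.1 + c2 * q.2 = 0 ->
  c0 + c1 * r.1 + c2 * r.2 = 0 -> [/\ c0 = 0, c1 = 0 & c2 = 0].
Proof.
move=> hc hp hq hr.
have hD : (q.1 - p.1) * (r.2 - p.2) - (q.2 - p.2) * (r.1 - p.1) != 0 by apply/eqP.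
have e1 : c1 * ((q.1 - p.1) * (r.2 - p.2) - (q.2 - p.2) * (r.1 - p.1)) = 0.
  have hqp : c0 + c1 * q.1 + c2 * q.2 - (c0 + c1 * p.1 + c2 * p.2) = 0 by rewrite hq hp subrr.
  have hrp : c0 + c1 * r.1 + c2 * r.2 - (c0 + c1 * p.1 + c2 * p.2) = 0 by rewrite hr hp subrr.
  by apply: (comb2 (r.2 - p.2) (-(q.2 - p.2)) hqp hrp); ring.
have e2 : c2 * ((q.1 - p.1) * (r.2 - p.2) - (q.2 - p.2) * (r.1 - p.1)) = 0.
  have hqp : c0 + c1 * q.1 + c2 * q.2 - (c0 + c1 * p.1 + c2 * p.2) = 0 by rewrite hq hp subrr.
  have hrp : c0 + c1 * r.1 + c2 * r.2 - (c0 + c1 * p.1 + c2 * p.2) = 0 by rewrite hr hp subrr.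
  by apply: (comb2 (-(r.1 - p.1)) (q.1 - p.1) hqp hrp); ring.
move/eqP: e1; rewrite mulf_eq0 (negbTE hD) orbF => /eqP e1.
move/eqP: e2; rewrite mulf_eq0 (negbTE hD) orbF => /eqP e2.
split => //; move: hp; rewrite e1 e2 !mul0r !addr0 //.
Qed.


Ltac natred := repeat match goal with
 | |- context [(?a %/ ?b)%N] => let v := eval vm_compute in (a %/ b)%N in change (a %/ b)%N with v
 | |- context [(?a %% ?b)%N] => let v := eval vm_compute in (a %% b)%N in change (a %% b)%N with v
 | |- context [(?a - ?b)%N] => let v := eval vm_compute in (a - b)%N in change (a - b)%N with v
 end.

Ltac roweq E i nR := let h := fresh "h" in
  have h := E i isT; rewrite !big_ord_recr big_ord0 /= in h; apply: (eq0_trans _ h); clear h;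
  rewrite /colloc_entry; cbv beta zeta; rewrite ?(sdivE1 nR) ?(sdivE2 nR); natred;
  rewrite /dphi /phi /lapphi /Defs.comp /=; ring.

Theorem mainTheorem3 (R : realFieldType) (lam : R) (n : R * R)
    (eta1 : nat -> R) (eta2 : nat -> R) (eta3 : R) (xi : nat -> R * R) :
  0 <= lam ->
  (n = (0, 1) \/ n = (0, -1)) ->
  (forall k l, (k < 3)%N -> (l < 3)%N -> k <> l -> eta1 k <> eta1 l) ->
  eta2 0%N <> eta2 1%N ->
  ~ collinear (xi 0%N) (xi 1%N) (xi 2%N) ->
  (forall Rad : R, 0 < Rad ->
     (forall k, (k < 3)%N -> in_disc Rad (eta1 k * Rad, 0)) /\
     (forall k, (k < 2)%N -> in_disc Rad (eta2 k * Rad, 0)) /\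
     in_disc Rad (eta3 * Rad, 0) /\
     (forall k, (k < 3)%N -> in_disc Rad (scalept Rad (xi k)))) ->
  let M := fun Rad : R =>
    colloc_mx lam n (fun k => (eta1 k * Rad, 0)) (fun k => (eta2 k * Rad, 0))
      (eta3 * Rad, 0) (fun k => scalept Rad (xi k)) Rad in
  (forall R1 R2 : R, 0 < R1 -> 0 < R2 -> M R1 = M R2) /\
  (forall Rad : R, 0 < Rad -> M Rad \in unitmx).
Proof.
move=> _ hn he1 he2 hxi _ M; split.
  move=> R1 R2 h1 h2.
  have n1 : R1 != 0 by rewrite gt_eqF.
  have n2 : R2 != 0 by rewrite gt_eqF.
  apply/matrixP => i j; rewrite /M !mxE /colloc_entry; cbv beta zeta.
  by rewrite !(sdivE1 n1) !(sdivE1 n2) !(sdivE2 n1) !(sdivE2 n2).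
move=> Rad hR; rewrite /M; clear M.
have nR : Rad != 0 by rewrite gt_eqF.
have [s [-> hs]] : exists s : R, n = (0, s) /\ s != 0.
  by case: hn => ->; [exists 1 | exists (-1)]; split => //; rewrite ?oppr_eq0 oner_eq0.
apply: inj_unit => v Hv.
pose x := fun k : nat => v (inord k) 0.
have Hx : forall j : 'I_15, v j 0 = x j by move=> j; rewrite /x inord_val.
have E : forall i (Hi : (i < 15)%N), \sum_(j < 15) (fun k : nat =>
   colloc_entry lam (0, s) (fun k => (eta1 k * Rad, 0)) (fun k => (eta2 k * Rad, 0))
      (eta3 * Rad, 0) (fun k => scalept Rad (xi k)) Rad i k * x k) j = 0.
  move=> i Hi; have := congr1 (fun A : 'cV_15 => A (Ordinal Hi) 0) Hv.
  rewrite /= !mxE => h; apply: (etrans _ h); apply: eq_bigr => j _ /=; by rewrite mxE Hx.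
have D00 : x 0%N + eta1 0%N * x 2%N + eta1 0%N ^+ 2 * x 6%N = 0 by roweq E 0%N nR.
have D01 : x 1%N + eta1 0%N * x 3%N + eta1 0%N ^+ 2 * x 7%N = 0 by roweq E 1%N nR.
have D10 : x 0%N + eta1 1%N * x 2%N + eta1 1%N ^+ 2 * x 6%N = 0 by roweq E 2%N nR.
have D11 : x 1%N + eta1 1%N * x 3%N + eta1 1%N ^+ 2 * x 7%N = 0 by roweq E 3%N nR.
have D20 : x 0%N + eta1 2%N * x 2%N + eta1 2%N ^+ 2 * x 6%N = 0 by roweq E 4%N nR.
have D21 : x 1%N + eta1 2%N * x 3%N + eta1 2%N ^+ 2 * x 7%N = 0 by roweq E 5%N nR.
have T00 : s * (x 3%N + x 4%N + eta2 0%N * (2 * x 7%N + x 10%N)) = 0 by roweq E 6%N nR.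
have T01 : s * (2 * x 5%N - x 12%N + eta2 0%N * (2 * x 11%N - x 13%N)) = 0 by roweq E 7%N nR.
have T10 : s * (x 3%N + x 4%N + eta2 1%N * (2 * x 7%N + x 10%N)) = 0 by roweq E 8%N nR.
have T11 : s * (2 * x 5%N - x 12%N + eta2 1%N * (2 * x 11%N - x 13%N)) = 0 by roweq E 9%N nR.
have B0 : - lam * x 0%N - lam * eta3 * x 2%N + (2 - lam * eta3 ^+ 2) * x 6%N + 2 * x 8%N - x 13%N = 0 by roweq E 10%N nR.
have B1 : - lam * x 1%N - lam * eta3 * x 3%N + (2 - lam * eta3 ^+ 2) * x 7%N + 2 * x 9%N - x 14%N = 0 by roweq E 11%N nR.
have V0 : x 2%N + 2 * (xi 0%N).1 * x 6%N + (xi 0%N).2 * x 10%N + x 5%N + 2 * (xi 0%N).2 * x 9%N + (xi 0%N).1 * x 11%N = 0 by roweq E 12%N nR.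
have V1 : x 2%N + 2 * (xi 1%N).1 * x 6%N + (xi 1%N).2 * x 10%N + x 5%N + 2 * (xi 1%N).2 * x 9%N + (xi 1%N).1 * x 11%N = 0 by roweq E 13%N nR.
have V2 : x 2%N + 2 * (xi 2%N).1 * x 6%N + (xi 2%N).2 * x 10%N + x 5%N + 2 * (xi 2%N).2 * x 9%N + (xi 2%N).1 * x 11%N = 0 by roweq E 14%N nR.
have n01 : eta1 0%N != eta1 1%N by apply/eqP; apply: he1 => //; discriminate.
have n02 : eta1 0%N != eta1 2%N by apply/eqP; apply: he1 => //; discriminate.
have n12 : eta1 1%N != eta1 2%N by apply/eqP; apply: he1 => //; discriminate.
have [X0 X2 X6] := vand3 n01 n02 n12 D00 D10 D20.
have [X1 X3 X7] := vand3 n01 n02 n12 D01 D11 D21.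
have he2' : eta2 0%N != eta2 1%N by apply/eqP.
have T0' : x 4%N + eta2 0%N * x 10%N = 0.
  by apply: (eq0_trans _ (stripS hs T00)); rewrite X3 X7; ring.
have T1' : x 4%N + eta2 1%N * x 10%N = 0.
  by apply: (eq0_trans _ (stripS hs T10)); rewrite X3 X7; ring.
have [X4 X10] := lin2 he2' T0' T1'.
have [Y0 Y1] := lin2 he2' (stripS hs T01) (stripS hs T11).
have B0' : 2 * x 8%N - x 13%N = 0.
  by apply: (eq0_trans _ B0); rewrite X0 X2 X6; ring.
have B1' : 2 * x 9%N - x 14%N = 0.
  by apply: (eq0_trans _ B1); rewrite X1 X3 X7; ring.
have V0' : x 5%N + x 11%N * (xi 0%N).1 + (2 * x 9%N) * (xi 0%N).2 = 0.
  by apply: (eq0_trans _ V0); rewrite X2 X6 X10; ring.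
have V1' : x 5%N + x 11%N * (xi 1%N).1 + (2 * x 9%N) * (xi 1%N).2 = 0.
  by apply: (eq0_trans _ V1); rewrite X2 X6 X10; ring.
have V2' : x 5%N + x 11%N * (xi 2%N).1 + (2 * x 9%N) * (xi 2%N).2 = 0.
  by apply: (eq0_trans _ V2); rewrite X2 X6 X10; ring.
have [X5 X11 Z9] := aff3 hxi V0' V1' V2'.
have X9 := two0 Z9.
have X12 : x 12%N = 0 by apply: (comb2 (-1) 2 Y0 X5); ring.
have X13 : x 13%N = 0 by apply: (comb2 (-1) 2 Y1 X11); ring.
have X14 : x 14%N = 0 by apply: (comb2 (-1) 1 B1' Z9); ring.
have X8 : x 8%N = 0.
  by apply: two0; apply: (comb2 1 1 B0' X13); ring.
have Xall : forall k, (k < 15)%N -> x k = 0.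
  move=> k; do 15! (case: k => [_|k]; first done); done.
apply/matrixP => i j; rewrite ord1 Hx !mxE; exact: Xall (ltn_ord i).
Qed.
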